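(* Let $\Omega=\{(x,y,z)\in\mathbb{R}^3: z<xy^2\}$. Then $\Omega$ is a $C^\infty$ domain, but $\Omega$ has no uniformly $C^2$ defining function.
   Context: A $C^m$ defining function for an open set $\Omega\subset\mathbb{R}^n$ is a real-valued $C^m$ function $\rho$ on an open neighborhood $U$ of $\partial\Omega$ with $\{x\in U:\rho<0\}=\Omega\cap U$ and $\nabla\rho\neq0$ on $\partial\Omega$; $\Omega$ is a $C^\infty$ domain if it has a $C^\infty$ defining function. A defining function is uniformly $C^m$ if $\operatorname{dist}(\partial\Omega,\partial U)>0$, $\sup_{U}\sum_{|\alpha|\le m}|\partial^\alpha\rho|<\infty$, and $\inf_U|\nabla\rho|>0$. *)

(* Defs.v *)
From Stdlib Require Import Reals Lra.
Open Scope R_scope.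

Definition pt : Type := (R * R * R)%type.

Definition dist3 (p q : pt) : R :=
  let '(x, y, z) := p in let '(x', y', z') := q in
  sqrt ((x - x')^2 + (y - y')^2 + (z - z')^2).

Definition is_open (U : pt -> Prop) : Prop :=
  forall p, U p -> exists r, 0 < r /\ forall q, dist3 p q < r -> U q.

Definition bdry (S : pt -> Prop) (p : pt) : Prop :=
  forall r, 0 < r ->
    (exists q, dist3 p q < r /\ S q) /\ (exists q, dist3 p q < r /\ ~ S q).

Definition shift (i : nat) (p : pt) (t : R) : pt :=
  let '(x, y, z) := p in
  match i with
  | 0%nat => (x + t, y, z)
  | 1%nat => (x, y + t, z)
  | _ => (x, y, z + t)
  end.

Definition has_partial (i : nat) (f : pt -> R) (p : pt) (d : R) : Prop :=
  derivable_pt_lim (fun t => f (shift i p t)) 0 d.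

Definition cont_on (U : pt -> Prop) (f : pt -> R) : Prop :=
  forall p, U p -> forall eps, 0 < eps ->
    exists del, 0 < del /\ forall q, dist3 p q < del -> Rabs (f q - f p) < eps.

Fixpoint Cm (m : nat) (U : pt -> Prop) (f : pt -> R) : Prop :=
  cont_on U f /\
  match m with
  | 0%nat => True
  | S k => forall i, (i < 3)%nat ->
      exists g : pt -> R, (forall p, U p -> has_partial i f p (g p)) /\ Cm k U g
  end.

Definition Cinf (U : pt -> Prop) (f : pt -> R) : Prop := forall m, Cm m U f.

Fixpoint bdd_Cm (m : nat) (U : pt -> Prop) (f : pt -> R) : Prop :=
  cont_on U f /\ (exists M, forall p, U p -> Rabs (f p) <= M) /\
  match m with
  | 0%nat => True
  | S k => forall i, (i < 3)%nat ->
      exists g : pt -> R, (forall p, U p -> has_partial i f p (g p)) /\ bdd_Cm k U g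
  end.

Definition defining_fun (m : nat) (Omega U : pt -> Prop) (rho : pt -> R) : Prop :=
  is_open U /\
  (forall p, bdry Omega p -> U p) /\
  (forall p, U p -> (rho p < 0 <-> Omega p)) /\
  Cm m U rho /\
  (forall p, bdry Omega p ->
     exists i d, (i < 3)%nat /\ has_partial i rho p d /\ d <> 0).

Definition is_Cinf_domain (Omega : pt -> Prop) : Prop :=
  exists (U : pt -> Prop) (rho : pt -> R),
    defining_fun 1 Omega U rho /\ Cinf U rho.

Definition uniformly_Cm_defining_fun (m : nat) (Omega U : pt -> Prop) (rho : pt -> R) : Prop :=
  defining_fun m Omega U rho /\
  (exists del, 0 < del /\ forall p q, bdry Omega p -> bdry U q -> del <= dist3 p q) /\
  bdd_Cm m U rho /\
  (exists c, 0 < c /\ forall p, U p -> forall d0 d1 d2,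
     has_partial 0 rho p d0 -> has_partial 1 rho p d1 -> has_partial 2 rho p d2 ->
     c <= sqrt (d0^2 + d1^2 + d2^2)).

Definition Omega7 (p : pt) : Prop := let '(x, y, z) := p in z < x * y^2.

(* Main.v *)
Require Import Defs.
From Stdlib Require Import Reals Lra Lia FunctionalExtensionality.
From Coquelicot Require Import Coquelicot.
Open Scope R_scope.

Definition px (p : pt) := fst (fst p).
Definition py (p : pt) := snd (fst p).
Definition pz (p : pt) := snd p.

Definition ctsat (f : pt -> R) (p : pt) := forall eps, 0 < eps ->
    exists del, 0 < del /\ forall q, dist3 p q < del -> Rabs (f q - f p) < eps.

Lemma coord_le (p q : pt) :
  Rabs (px q - px p) <= dist3 p q /\ Rabs (py q - py p) <= dist3 p q /\
  Rabs (pz q - pz p) <= dist3 p q.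
Proof.
  destruct p as [[x y] z]; destruct q as [[x' y'] z']; unfold dist3, px, py, pz; cbv beta iota delta [fst snd].
  assert (H : forall u v w, Rabs u <= sqrt (u^2 + v^2 + w^2)).
  { intros u v w. rewrite <- sqrt_Rsqr_abs. apply sqrt_le_1_alt.
    unfold Rsqr; simpl; nra. }
  repeat split.
  - rewrite <- Rabs_Ropp. replace (- (x' - x)) with (x - x') by ring. apply H.
  - rewrite <- Rabs_Ropp. replace (- (y' - y)) with (y - y') by ring.
    replace ((x - x') ^ 2 + (y - y') ^ 2 + (z - z') ^ 2) with
      ((y - y') ^ 2 + (x - x') ^ 2 + (z - z') ^ 2) by ring. apply H.
  - rewrite <- Rabs_Ropp. replace (- (z' - z)) with (z - z') by ring.
    replace ((x - x') ^ 2 + (y - y') ^ 2 + (z - z') ^ 2) with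
      ((z - z') ^ 2 + (x - x') ^ 2 + (y - y') ^ 2) by ring. apply H.
Qed.

Lemma ct_const c p : ctsat (fun _ => c) p.
Proof. intros eps He; exists 1; split; [lra|]; intros; rewrite Rminus_diag, Rabs_R0; lra. Qed.

Lemma ct_px p : ctsat px p.
Proof. intros eps He; exists eps; split; [lra|]; intros q Hq.
  destruct (coord_le p q) as [H _]; lra. Qed.
Lemma ct_py p : ctsat py p.
Proof. intros eps He; exists eps; split; [lra|]; intros q Hq.
  destruct (coord_le p q) as [_ [H _]]; lra. Qed.
Lemma ct_pz p : ctsat pz p.
Proof. intros eps He; exists eps; split; [lra|]; intros q Hq.
  destruct (coord_le p q) as [_ [_ H]]; lra. Qed.

Lemma ct_plus f g p : ctsat f p -> ctsat g p -> ctsat (fun q => f q + g q) p.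
Proof.
  intros Hf Hg eps He.
  destruct (Hf (eps/2)) as [d1 [Hd1 H1]]; [lra|].
  destruct (Hg (eps/2)) as [d2 [Hd2 H2]]; [lra|].
  exists (Rmin d1 d2); split; [apply Rmin_pos; lra|]. intros q Hq.
  assert (A := H1 q (Rlt_le_trans _ _ _ Hq (Rmin_l _ _))).
  assert (B := H2 q (Rlt_le_trans _ _ _ Hq (Rmin_r _ _))).
  replace (f q + g q - (f p + g p)) with ((f q - f p) + (g q - g p)) by ring.
  eapply Rle_lt_trans; [apply Rabs_triang|]. lra.
Qed.

Lemma ct_mult f g p : ctsat f p -> ctsat g p -> ctsat (fun q => f q * g q) p.
Proof.
  intros Hf Hg eps He.
  set (A := Rabs (f p) + 1). set (B := Rabs (g p) + 1).
  assert (HA : 0 < A) by (unfold A; pose proof (Rabs_pos (f p)); lra).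
  assert (HB : 0 < B) by (unfold B; pose proof (Rabs_pos (g p)); lra).
  destruct (Hf (Rmin 1 (eps/(2*B)))) as [d1 [Hd1 H1]].
  { apply Rmin_pos; [lra|]. apply Rdiv_lt_0_compat; lra. }
  destruct (Hg (eps/(2*A))) as [d2 [Hd2 H2]]. { apply Rdiv_lt_0_compat; lra. }
  exists (Rmin d1 d2); split; [apply Rmin_pos; lra|]. intros q Hq.
  assert (X := H1 q (Rlt_le_trans _ _ _ Hq (Rmin_l _ _))).
  assert (Y := H2 q (Rlt_le_trans _ _ _ Hq (Rmin_r _ _))).
  pose proof (Rmin_l 1 (eps/(2*B))). pose proof (Rmin_r 1 (eps/(2*B))).
  assert (Hfq : Rabs (f q) <= A).
  { unfold A. replace (f q) with ((f q - f p) + f p) by ring.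
    eapply Rle_trans; [apply Rabs_triang|]. lra. }
  replace (f q * g q - f p * g p) with (f q * (g q - g p) + g p * (f q - f p)) by ring.
  eapply Rle_lt_trans; [apply Rabs_triang|]. rewrite !Rabs_mult.
  assert (E1 : Rabs (f q) * Rabs (g q - g p) <= A * (eps / (2*A))).
  { apply Rmult_le_compat; try apply Rabs_pos; lra. }
  assert (E2 : Rabs (g p) * Rabs (f q - f p) <= B * (eps / (2*B))).
  { assert (Bge : Rabs (g p) <= B) by (unfold B; lra).
    apply Rmult_le_compat; try apply Rabs_pos; lra. }
  assert (E3 : Rabs (g p) * Rabs (f q - f p) < B * (eps / (2*B)) \/
               Rabs (g p) * Rabs (f q - f p) = B * (eps / (2*B))) by lra.
  replace (A * (eps / (2*A))) with (eps/2) in E1 by (field; lra).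
  replace (B * (eps / (2*B))) with (eps/2) in E2, E3 by (field; lra).
  assert (S : Rabs (f q) * Rabs (g q - g p) < eps/2 \/ Rabs (g p) * Rabs (f q - f p) < eps/2).
  { destruct (Req_dec (Rabs (f q)) 0) as [Z|Z].
    - left. rewrite Z. lra.
    - left. assert (0 < Rabs (f q)) by (pose proof (Rabs_pos (f q)); lra).
      apply Rle_lt_trans with (A * Rabs (g q - g p)).
      + apply Rmult_le_compat_r; [apply Rabs_pos|lra].
      + replace (eps/2) with (A * (eps/(2*A))) by (field; lra).
        apply Rmult_lt_compat_l; lra. }
  lra.
Qed.

Definition P (a b c d e g h : R) (q : pt) : R :=
  a + b * px q + c * py q + d * pz q + e * px q * py q + g * py q * py q
  + h * px q * py q * py q.

Lemma P_ct a b c d e g h p : ctsat (P a b c d e g h) p.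
Proof.
  unfold P.
  repeat first [ apply ct_plus | apply ct_mult | apply ct_const | apply ct_px
               | apply ct_py | apply ct_pz ].
Qed.

Lemma P_Cm : forall m a b c d e g h, Cm m (fun _ => True) (P a b c d e g h).
Proof.
  induction m; intros; simpl; split.
  - intros p _; apply P_ct.
  - exact I.
  - intros p _; apply P_ct.
  - intros i Hi.
    destruct i as [|[|[|i]]]; [| | | lia].
    + exists (P b 0 e 0 0 h 0); split; [|apply IHm].
      intros [[x y] z] _. unfold has_partial. apply is_derive_Reals.
      unfold P, px, py, pz; simpl. auto_derive; [exact I|]. ring.
    + exists (P c e (2*g) 0 (2*h) 0 0); split; [|apply IHm].
      intros [[x y] z] _. unfold has_partial. apply is_derive_Reals.
      unfold P, px, py, pz; simpl. auto_derive; [exact I|]. ring.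
    + exists (P d 0 0 0 0 0 0); split; [|apply IHm].
      intros [[x y] z] _. unfold has_partial. apply is_derive_Reals.
      unfold P, px, py, pz; simpl. auto_derive; [exact I|]. ring.
Qed.

Lemma part1 : is_Cinf_domain Omega7.
Proof.
  exists (fun _ => True), (P 0 0 0 1 0 0 (-1)). split.
  - split; [|split; [|split; [|split]]].
    + intros p _; exists 1; split; [lra| auto].
    + auto.
    + intros [[x y] z] _. unfold P, px, py, pz, Omega7; simpl. split; intros; nra.
    + exact (P_Cm 1 0 0 0 1 0 0 (-1)).
    + intros [[x y] z] _. exists 2%nat, 1. split; [lia|]. split; [|lra].
      unfold has_partial. apply is_derive_Reals.
      unfold P, px, py, pz; simpl. auto_derive; [exact I|]. ring.
  - intros m; apply P_Cm.
Qed.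

Lemma lip (F F' : R -> R) (M a b : R) : a <= b ->
  (forall t, a <= t <= b -> derivable_pt_lim F t (F' t)) ->
  (forall t, a <= t <= b -> Rabs (F' t) <= M) ->
  Rabs (F b - F a) <= M * (b - a).
Proof.
  intros Hab HD HM. destruct (Req_dec a b) as [E|E].
  - subst. rewrite Rminus_diag, Rabs_R0. ring_simplify. lra.
  - destruct (MVT_cor2 F F' a b ltac:(lra) HD) as [c [Hc Hr]].
    rewrite Hc, Rabs_mult, (Rabs_right (b - a)) by lra.
    apply Rmult_le_compat_r; [lra|]. apply HM; lra.
Qed.

Lemma shift_lim (G : R -> R) (t0 d : R) :
  derivable_pt_lim (fun t => G (t0 + t)) 0 d -> derivable_pt_lim G t0 d.
Proof.
  intros H eps He. destruct (H eps He) as [del Hd]. exists del. intros h Hh Hl.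
  specialize (Hd h Hh Hl). rewrite Rplus_0_l, Rplus_0_r in Hd. exact Hd.
Qed.

Lemma line1 f x y z d : has_partial 1 f (x, y, z) d ->
  derivable_pt_lim (fun u => f (x, u, z)) y d.
Proof. intros H. apply (shift_lim (fun u => f (x, u, z))). exact H. Qed.

Lemma line2 f x y z d : has_partial 2 f (x, y, z) d ->
  derivable_pt_lim (fun u => f (x, y, u)) z d.
Proof. intros H. apply (shift_lim (fun u => f (x, y, u))). exact H. Qed.

Lemma locmax (f : R -> R) l r : derivable_pt_lim f 0 l -> f 0 = 0 -> 0 < r ->
  (forall t, Rabs t < r -> f t <= 0) -> l = 0.
Proof.
  intros Hd H0 Hr Hle.
  destruct (Rtotal_order l 0) as [L|[L|L]]; auto; exfalso.
  - destruct (Hd (-l) ltac:(lra)) as [del Hdel].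
    pose proof (cond_pos del) as Hp.
    set (h := - (Rmin del r / 2)).
    assert (Hm : 0 < Rmin del r) by (apply Rmin_pos; lra).
    pose proof (Rmin_l del r). pose proof (Rmin_r del r).
    assert (Hh : h <> 0) by (unfold h; lra).
    assert (Ha : Rabs h < del) by (unfold h; rewrite Rabs_Ropp, Rabs_right; lra).
    specialize (Hdel h Hh Ha). rewrite Rplus_0_l, H0, Rminus_0_r in Hdel.
    assert (Hf : f h <= 0) by (apply Hle; unfold h; rewrite Rabs_Ropp, Rabs_right; lra).
    assert (Q : 0 <= f h / h).
    { unfold Rdiv. replace (f h * / h) with ((- f h) * / (- h)) by (field; lra).
      apply Rmult_le_pos; [lra|]. left; apply Rinv_0_lt_compat; unfold h; lra. }
    apply Rabs_def2 in Hdel. lra.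
  - destruct (Hd l ltac:(lra)) as [del Hdel].
    pose proof (cond_pos del) as Hp.
    set (h := Rmin del r / 2).
    assert (Hm : 0 < Rmin del r) by (apply Rmin_pos; lra).
    pose proof (Rmin_l del r). pose proof (Rmin_r del r).
    assert (Hh : h <> 0) by (unfold h; lra).
    assert (Ha : Rabs h < del) by (unfold h; rewrite Rabs_right; lra).
    specialize (Hdel h Hh Ha). rewrite Rplus_0_l, H0, Rminus_0_r in Hdel.
    assert (Hf : f h <= 0) by (apply Hle; unfold h; rewrite Rabs_right; lra).
    assert (Q : f h / h <= 0).
    { unfold Rdiv. replace (f h * / h) with (- ((- f h) * / h)) by (field; lra).
      assert (0 <= (- f h) * / h); [|lra].
      apply Rmult_le_pos; [lra|]. left; apply Rinv_0_lt_compat; unfold h; lra. }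
    apply Rabs_def2 in Hdel. lra.
Qed.

Lemma dist_yz x y z y' z' :
  dist3 (x, y, z) (x, y', z') <= Rabs (y' - y) + Rabs (z' - z).
Proof.
  unfold dist3.
  rewrite <- (sqrt_pow2 (Rabs (y' - y) + Rabs (z' - z)))
    by (pose proof (Rabs_pos (y'-y)); pose proof (Rabs_pos (z'-z)); lra).
  apply sqrt_le_1_alt.
  pose proof (Rabs_pos (y'-y)); pose proof (Rabs_pos (z'-z)).
  pose proof (pow2_abs (y' - y)); pose proof (pow2_abs (z' - z)).
  replace ((y - y')^2) with ((y' - y)^2) by ring.
  replace ((z - z')^2) with ((z' - z)^2) by ring. nra.
Qed.

Lemma dist_z x y z s : dist3 (x, y, z) (x, y, z - s) = Rabs s.
Proof.
  unfold dist3. rewrite <- sqrt_Rsqr_abs. f_equal. unfold Rsqr. ring.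
Qed.

Lemma bdry_surf x y z : z = x * y^2 -> bdry Omega7 (x, y, z).
Proof.
  intros Hz r Hr. split.
  - exists (x, y, z - r/2). rewrite dist_z, Rabs_right by lra. split; [lra|].
    unfold Omega7. lra.
  - exists (x, y, z - (- (r/2))). rewrite dist_z, Rabs_Ropp, Rabs_right by lra.
    split; [lra|]. unfold Omega7. lra.
Qed.

Lemma part2 :
  ~ (exists (U : pt -> Prop) (rho : pt -> R), uniformly_Cm_defining_fun 2 Omega7 U rho).
Proof.
  intros [U [rho [[HUo [HbU [Hiff [_ _]]]] [_ [Hb Hc]]]]].
  simpl in Hb. destruct Hb as [Hcont [_ Hpar]].
  destruct (Hpar 0%nat) as [g0 [Hg0 _]]; [lia|].
  destruct (Hpar 1%nat) as [g1 [Hg1 [_ [_ H1]]]]; [lia|].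
  destruct (H1 1%nat) as [g11 [Hg11 [_ [[M11 HM11] _]]]]; [lia|].
  destruct (Hpar 2%nat) as [g2 [Hg2 [_ [_ H2]]]]; [lia|].
  destruct (H2 1%nat) as [g21 [Hg21 [_ [[M21 HM21] _]]]]; [lia|].
  destruct (H2 2%nat) as [g22 [Hg22 [_ [[M22 HM22] _]]]]; [lia|].
  destruct Hc as [c [Hc0 Hc]].
  set (M := Rabs M11 + Rabs M21 + Rabs M22 + 1).
  assert (HM0 : 0 < M) by (unfold M; pose proof (Rabs_pos M11);
    pose proof (Rabs_pos M21); pose proof (Rabs_pos M22); lra).
  assert (B11 : forall p, U p -> Rabs (g11 p) <= M).
  { intros p Hp. specialize (HM11 p Hp). pose proof (Rle_abs M11).
    unfold M; pose proof (Rabs_pos M21); pose proof (Rabs_pos M22); lra. }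
  assert (B21 : forall p, U p -> Rabs (g21 p) <= M).
  { intros p Hp. specialize (HM21 p Hp). pose proof (Rle_abs M21).
    unfold M; pose proof (Rabs_pos M11); pose proof (Rabs_pos M22); lra. }
  assert (B22 : forall p, U p -> Rabs (g22 p) <= M).
  { intros p Hp. specialize (HM22 p Hp). pose proof (Rle_abs M22).
    unfold M; pose proof (Rabs_pos M21); pose proof (Rabs_pos M11); lra. }
  assert (Zs : forall x y z, z = x * y^2 -> rho (x, y, z) = 0).
  { intros x y z Hz.
    assert (Hp : U (x, y, z)) by (apply HbU, bdry_surf, Hz).
    assert (Hge : 0 <= rho (x, y, z)).
    { destruct (Rle_or_lt 0 (rho (x, y, z))) as [G|G]; auto.
      apply (Hiff _ Hp) in G. unfold Omega7 in G. lra. }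
    destruct Hge as [G|G]; [|auto]. exfalso.
    destruct (HUo _ Hp) as [r [Hr Hball]].
    destruct (Hcont _ Hp (rho (x, y, z)) G) as [del [Hdel Hd]].
    pose proof (Rmin_l r del). pose proof (Rmin_r r del).
    assert (Hm : 0 < Rmin r del) by (apply Rmin_pos; lra).
    set (m := Rmin r del) in *.
    assert (Dq : dist3 (x, y, z) (x, y, z - m/2) = m/2)
      by (rewrite dist_z, Rabs_right; lra).
    assert (Uq : U (x, y, z - m/2)) by (apply Hball; lra).
    assert (Oq : rho (x, y, z - m/2) < 0) by (apply (Hiff _ Uq); unfold Omega7; lra).
    specialize (Hd (x, y, z - m/2) ltac:(lra)).
    apply Rabs_def2 in Hd. lra. }
  set (a := 2 * M / c + 1).
  assert (Hac : a * c = 2 * M + c) by (unfold a; field; lra).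
  assert (Ha : 0 < a) by (unfold a; assert (0 < 2 * M / c) by (apply Rdiv_lt_0_compat; lra); lra).
  assert (HU0 : U (a, 0, 0)) by (apply HbU, bdry_surf; ring).
  destruct (HUo _ HU0) as [r [Hr Hball]].
  assert (InU : forall t s, Rabs t + Rabs s < r -> U (a, t, s)).
  { intros t s H. apply Hball. eapply Rle_lt_trans; [apply dist_yz|].
    rewrite !Rminus_0_r. exact H. }
  assert (G0 : g0 (a, 0, 0) = 0).
  { specialize (Hg0 _ HU0). unfold has_partial in Hg0.
    assert (E : (fun t => rho (shift 0 (a, 0, 0) t)) = fct_cte 0).
    { apply functional_extensionality. intros t. simpl. unfold fct_cte. apply Zs. ring. }
    rewrite E in Hg0. eapply uniqueness_limite; [exact Hg0|]. apply derivable_pt_lim_const. }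
  assert (G1 : g1 (a, 0, 0) = 0).
  { specialize (Hg1 _ HU0). unfold has_partial in Hg1. simpl in Hg1.
    apply (locmax _ _ r Hg1); auto.
    - apply Zs; ring.
    - intros t Ht. rewrite Rplus_0_l.
      assert (Ut : U (a, t, 0)) by (apply InU; rewrite Rabs_R0; lra).
      destruct (Req_dec t 0) as [E|E].
      + subst. rewrite Zs; [lra|ring].
      + left. apply (Hiff _ Ut). unfold Omega7.
        assert (0 < t^2) by (pose proof (Rsqr_pos_lt t E); unfold Rsqr in *; nra). nra. }
  assert (G2 : c <= Rabs (g2 (a, 0, 0))).
  { specialize (Hc _ HU0 _ _ _ (Hg0 _ HU0) (Hg1 _ HU0) (Hg2 _ HU0)).
    rewrite G0, G1 in Hc. rewrite <- sqrt_Rsqr_abs.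
    replace (Rsqr (g2 (a, 0, 0))) with (0 ^ 2 + 0 ^ 2 + g2 (a, 0, 0) ^ 2)
      by (unfold Rsqr; ring). exact Hc. }
  set (k := 1 + a).
  pose proof (Rmin_l r (c / (4 * M))). pose proof (Rmin_r r (c / (4 * M))).
  assert (Hcm : 0 < c / (4 * M)) by (apply Rdiv_lt_0_compat; lra).
  assert (Hm0 : 0 < Rmin r (c / (4 * M))) by (apply Rmin_pos; lra).
  set (m := Rmin r (c / (4 * M))) in *.
  assert (HmM : m * M <= c / 4).
  { replace (c/4) with (c / (4 * M) * M) by (field; lra). apply Rmult_le_compat_r; lra. }
  pose proof (Rmin_l 1 m). pose proof (Rmin_r 1 m).
  assert (Hn0 : 0 < Rmin 1 m) by (apply Rmin_pos; lra).
  set (n := Rmin 1 m) in *.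
  set (y := n / (2 * k)).
  assert (Hyk : y * k = n / 2) by (unfold y, k; field; lra).
  assert (Hy0 : 0 < y) by (unfold y, k; apply Rdiv_lt_0_compat; lra).
  assert (Hya : 0 < y * a) by (apply Rmult_lt_0_compat; lra).
  assert (Hy1 : y <= 1) by (unfold k in Hyk; lra).
  assert (Hay : a * y^2 <= a * y) by (simpl; nra).
  assert (Hay0 : 0 < a * y^2) by (simpl; nra).
  assert (Box : forall t s, 0 <= t <= y -> 0 <= s <= a * y^2 -> U (a, t, s)).
  { intros t s Ht Hs. apply InU. rewrite !Rabs_right by lra.
    unfold k in Hyk. nra. }
  assert (HA : forall t, 0 <= t <= y -> Rabs (g1 (a, t, 0)) <= M * t).
  { intros t Ht.
    assert (L := lip (fun u => g1 (a, u, 0)) (fun u => g11 (a, u, 0)) M 0 t ltac:(lra)).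
    simpl in L. rewrite G1, Rminus_0_r, Rminus_0_r in L. apply L.
    - intros u Hu. apply line1. apply Hg11, Box; lra.
    - intros u Hu. apply B11, Box; lra. }
  assert (HB : Rabs (rho (a, y, 0)) <= M * y * y).
  { destruct (MVT_cor2 (fun u => rho (a, u, 0)) (fun u => g1 (a, u, 0)) 0 y Hy0)
      as [c1 [Hc1 Hr1]].
    - intros u Hu. apply line1. apply Hg1, Box; lra.
    - simpl in Hc1. rewrite (Zs a 0 0) in Hc1 by ring.
      rewrite Rminus_0_r, Rminus_0_r in Hc1. rewrite Hc1, Rabs_mult, (Rabs_right y) by lra.
      assert (Q := HA c1 ltac:(lra)).
      apply Rmult_le_compat_r; [lra|]. assert (M * c1 <= M * y) by (apply Rmult_le_compat_l; lra). lra. }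
  destruct (MVT_cor2 (fun u => rho (a, y, u)) (fun u => g2 (a, y, u)) 0 (a * y^2) Hay0)
      as [xi [Hxi Hrx]].
  { intros u Hu. apply line2. apply Hg2, Box; lra. }
  rewrite (Zs a y (a * y^2)) in Hxi by ring.
  assert (D1 : Rabs (g2 (a, y, xi) - g2 (a, 0, xi)) <= M * (y - 0)).
  { apply (lip (fun u => g2 (a, u, xi)) (fun u => g21 (a, u, xi))); [lra| |].
    - intros u Hu. apply line1. apply Hg21, Box; lra.
    - intros u Hu. apply B21, Box; lra. }
  assert (D2 : Rabs (g2 (a, 0, xi) - g2 (a, 0, 0)) <= M * (xi - 0)).
  { apply (lip (fun u => g2 (a, 0, u)) (fun u => g22 (a, 0, u))); [lra| |].
    - intros u Hu. apply line2. apply Hg22, Box; lra.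
    - intros u Hu. apply B22, Box; lra. }
  assert (Hbig : 7 * c / 8 <= Rabs (g2 (a, y, xi))).
  { assert (E : g2 (a, 0, 0) = g2 (a, y, xi) - (g2 (a, y, xi) - g2 (a, 0, xi))
                 - (g2 (a, 0, xi) - g2 (a, 0, 0))) by ring.
    assert (T := Rabs_triang (g2 (a, y, xi) - (g2 (a, y, xi) - g2 (a, 0, xi)))
                   (- (g2 (a, 0, xi) - g2 (a, 0, 0)))).
    assert (T2 := Rabs_triang (g2 (a, y, xi)) (- (g2 (a, y, xi) - g2 (a, 0, xi)))).
    rewrite Rabs_Ropp in T, T2.
    replace (g2 (a, y, xi) - (g2 (a, y, xi) - g2 (a, 0, xi)) +
             - (g2 (a, 0, xi) - g2 (a, 0, 0))) with (g2 (a, 0, 0)) in T by ring.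
    replace (g2 (a, y, xi) + - (g2 (a, y, xi) - g2 (a, 0, xi))) with
      (g2 (a, y, xi) - (g2 (a, y, xi) - g2 (a, 0, xi))) in T2 by ring.
    assert (M * y + M * xi <= c / 8).
    { assert (M * xi <= M * (a * y)) by (apply Rmult_le_compat_l; lra).
      unfold k in Hyk. nra. }
    lra. }
  assert (Heq : Rabs (rho (a, y, 0)) = a * y^2 * Rabs (g2 (a, y, xi))).
  { replace (rho (a, y, 0)) with (- (g2 (a, y, xi) * (a * y ^ 2 - 0))) by lra.
    rewrite Rabs_Ropp, Rabs_mult, Rminus_0_r, (Rabs_right (a * y^2)) by lra. ring. }
  assert (Hf : a * (7 * c / 8) <= M).
  { assert (a * y^2 * (7 * c / 8) <= M * y * y).
    { eapply Rle_trans; [|exact HB]. rewrite Heq.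
      apply Rmult_le_compat_l; lra. }
    simpl in H5. nra. }
  nra.
Qed.

Theorem mainTheorem7 :
  is_Cinf_domain Omega7 /\
  ~ (exists (U : pt -> Prop) (rho : pt -> R), uniformly_Cm_defining_fun 2 Omega7 U rho).
Proof. split; [exact part1 | exact part2]. Qed.
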